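(* Let $i,j$ be integers with $0\leq j\leq i$. Then, as an identity of polynomials in $q$ (equivalently, of formal power series in $q$), $$\sum_{k=0}^{j}(q^{i-k+1};q)_k\,{j\brack k}\, q^{(i-k)(j-k)}=\sum_{\lambda\in O(i,j)}(-1)^{ol(\lambda)}\,q^{|\lambda|+ol(\lambda)\,(i-\ell(\lambda)+1)}\,q^{(i-\ell(\lambda))(j-\ell(\lambda))},$$ where $O(i,j)$ is the set of overpartitions defined in the context.
   Context: For $k\geq 1$, $(a;q)_k=(1-a)(1-aq)\cdots(1-aq^{k-1})$ and $(a;q)_0=1$; ${j\brack k}=\frac{(q;q)_j}{(q;q)_k(q;q)_{j-k}}$ is the Gaussian (q-binomial) coefficient. An overpartition with $k$ nonnegative parts is a sequence $\lambda=(\lambda_1,\dots,\lambda_k)$ of integers with $\lambda_1\geq\lambda_2\geq\cdots\geq\lambda_k\geq 0$ in which the first occurrence (leftmost position) of each value may or may not be marked as ''overlined'' (the value $0$ may also be overlined); thus overlined parts have distinct values. Its size is $|\lambda|=\sum_r\lambda_r$, its length $\ell(\lambda)=k$ counts all parts including zeros, and $ol(\lambda)$ is the number of overlined parts. For $0\leq k\leq j$, $O(i,j,k)$ denotes the set of overpartitions $\lambda$ with exactly $k$ nonnegative parts such that (1) every part is at most $j-1$; and (2) when $k\geq 2$, for each $1\leq s\leq k-1$ and each position $r$ with $\lambda_r=j-s$, at least $k-s$ of the parts $\lambda_{r+1},\dots,\lambda_k$ are overlined. (The paper also views each overline of an element of $O(i,j,k)$ as carrying weight $i-k+1$; this weight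 appears as the factor $i-\ell(\lambda)+1$ in the exponent.) $O(i,0,0)$ consists only of the empty partition, and $O(i,j)=\biguplus_{k=0}^{j}O(i,j,k)$. *)

(* Defs.v *)
(* Polynomials in q are elements of {poly rat}, q = 'X. *)
From HB Require Import structures.
From mathcomp Require Import all_boot all_order all_algebra.
Set Implicit Arguments. Unset Strict Implicit. Unset Printing Implicit Defensive.
Import Order.TTheory GRing.Theory Num.Theory.
Local Open Scope ring_scope.

Definition qpoch (a : {poly rat}) (k : nat) : {poly rat} :=
  \prod_(m < k) (1 - a * 'X^m).

(* Gaussian coefficient [j brack k] = (q;q)_j / ((q;q)_k (q;q)_{j-k}); the
   division is exact in {poly rat} (used only for k <= j). *)
Definition gauss (j k : nat) : {poly rat} :=
  qpoch 'X j %/ (qpoch 'X k * qpoch 'X (j - k)).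

(* An overpartition with k parts is a sequence of (value, overlined?) pairs. *)
Definition opval (x : nat * bool) : nat := x.1.
Definition opover (x : nat * bool) : bool := x.2.

Definition op_nonincr (s : seq (nat * bool)) : bool :=
  sorted (fun x y => opval y <= opval x)%N s.

(* only the first (leftmost) occurrence of a value may be overlined *)
Definition op_first (s : seq (nat * bool)) : bool :=
  all (fun r => opover (nth (0%N, false) s r) ==>
        all (fun r' => opval (nth (0%N, false) s r') != opval (nth (0%N, false) s r))
            (iota 0 r))
      (iota 0 (size s)).

Definition is_overpartition (s : seq (nat * bool)) : bool :=
  op_nonincr s && op_first s.

Definition ol (s : seq (nat * bool)) : nat := count opover s.
Definition opsize (s : seq (nat * bool)) : nat := sumn (map opval s).

(* Condition (2) of O(i,j,k) (positions 0-indexed here: position r stands for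
   lambda_{r+1}; parts after it are drop r.+1 s).  For each 1 <= s' <= k-1 and
   each position r with lambda_r = j - s', at least k - s' of the later parts
   are overlined.  (For k < 2 the range of s' is empty.) *)
Definition op_cond2 (j : nat) (s : seq (nat * bool)) : bool :=
  let k := size s in
  all (fun sp =>
     all (fun r => (opval (nth (0%N, false) s r) + sp == j)%N ==>
                   (k - sp <= ol (drop r.+1 s))%N)
         (iota 0 k))
   (iota 1 k.-1).

(* forgetting the bound on values: parts are elements of 'I_j, i.e. <= j-1,
   which is condition (1). *)
Definition op_of_tuple (j k : nat) (t : k.-tuple ('I_j * bool)) : seq (nat * bool) :=
  [seq (nat_of_ord x.1, x.2) | x <- t].

Definition inO (j k : nat) (t : k.-tuple ('I_j * bool)) : bool :=
  is_overpartition (op_of_tuple t) && op_cond2 j (op_of_tuple t).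

(* Main.v *)
Require Import Defs.
From HB Require Import structures.
From mathcomp Require Import all_boot all_order all_algebra.
From mathcomp Require Import ring zify.
Import Order.TTheory GRing.Theory Num.Theory.
Section SA.
Local Open Scope ring_scope.

Fixpoint G (k d : nat) : {poly rat} :=
  if k is k'.+1 then \sum_(v < d.+1) 'X^(k * v) * G k' (d - v) else 1.

Lemma G0d d : G 0 d = 1. Proof. by []. Qed.

Lemma Gk0 k : G k 0 = 1.
Proof. elim: k => [|k IH] //=. by rewrite big_ord1 /= muln0 expr0 mul1r subn0 IH. Qed.

Lemma GS k d : G k.+1 d.+1 = G k d.+1 + 'X^(k.+1) * G k.+1 d.
Proof.
rewrite /= big_ord_recl /= muln0 expr0 mul1r subn0; congr (_ + _).
rewrite mulr_sumr; apply: eq_bigr => v _ /=.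
by rewrite subSS mulnS exprD mulrA.
Qed.

Lemma qpochS a k : qpoch a k.+1 = qpoch a k * (1 - a * 'X^k).
Proof. by rewrite /qpoch big_ord_recr. Qed.

Lemma qpoch0 a : qpoch a 0 = 1.
Proof. by rewrite /qpoch big_ord0. Qed.

Lemma Pprod k d : qpoch 'X (d + k) = qpoch 'X k * qpoch 'X d * G k d.
Proof.
elim: k d => [|k IHk] d.
  by rewrite addn0 qpoch0 mul1r mulr1.
elim: d => [|d IHd].
  by rewrite add0n qpoch0 Gk0 !mulr1.
have E1 := IHk d.+1. rewrite addSn in E1.
rewrite addnS in IHd.
rewrite GS addSn addnS (qpochS _ (d+k).+1) (qpochS _ k) (qpochS _ d).
rewrite (qpochS _ d) in E1. rewrite (qpochS _ k) in IHd.
set Q := qpoch 'X (d + k).+1 in E1 IHd *.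
set pk := qpoch 'X k in E1 IHd *.
set pd := qpoch 'X d in E1 IHd *.
rewrite [in RHS]mulrDr.
have -> : pk * (1 - 'X * 'X^k) * (pd * (1 - 'X * 'X^d)) * G k d.+1
   = (1 - 'X * 'X^k) * (pk * (pd * (1 - 'X * 'X^d)) * G k d.+1) by ring.
have -> : pk * (1 - 'X * 'X^k) * (pd * (1 - 'X * 'X^d)) * ('X^(k.+1) * G k.+1 d)
   = 'X * 'X^k * (1 - 'X * 'X^d) * (pk * (1 - 'X * 'X^k) * pd * G k.+1 d).
  by rewrite exprS; ring.
rewrite -E1 -IHd.
rewrite !exprS exprD.
ring.
Qed.

Lemma qpochX_neq0 n : qpoch 'X n != 0.
Proof.
rewrite /qpoch; apply/prodf_neq0 => m _.
apply/eqP => /(congr1 (fun p : {poly rat} => p`_0)) /eqP.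
by rewrite coefB coef1 -exprS coefXn coef0 /= subr0 oner_eq0.
Qed.

Lemma gaussG k d : gauss (d + k) k = G k d.
Proof.
by rewrite /gauss addnK Pprod mulrC mulpK // mulf_neq0 // qpochX_neq0.
Qed.

End SA.

Definition RR (a b : nat * bool) : bool := (a.1 + a.2 <= b.1)%N.
Fixpoint cR (e : nat) (r : seq (nat * bool)) : bool :=
  if r is x :: r' then (x.1 <= e) && cR (e + x.2) r' else true.
Definition sh (c : nat) (y : nat * bool) : nat * bool := (y.1 + c, y.2).
Definition Xs (d : nat) : seq (nat * bool) :=
  [seq (v, b) | v <- iota 0 d.+1, b <- [:: false; true]].
Fixpoint E (k d : nat) : seq (seq (nat * bool)) :=
  if k is k'.+1 then
    [seq x :: map (sh (x.1 + x.2)) r | x : nat * bool <- Xs d, r <- E k' (d - x.1)]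
  else [:: [::]].

Lemma mem_Xs d x : (x \in Xs d) = (x.1 <= d).
Proof.
rewrite /Xs -ltnS; move: d.+1 => n.
case: x => v b; apply/allpairsP/idP.
  by case=> [[v1 b1]] [H _ [-> _]]; move: H; rewrite mem_iota /=.
move=> /= H; exists (v, b); split => //; first by rewrite mem_iota /= add0n H.
by case: b.
Qed.

Lemma uniq_Xs d : uniq (Xs d).
Proof.
apply: allpairs_uniq; first exact: iota_uniq; first by [].
by move=> [a b] [c e] _ _ /=.
Qed.

Lemma pairwise_sh c r : pairwise RR (map (sh c) r) = pairwise RR r.
Proof.
rewrite pairwise_map; apply: eq_pairwise => a b.
by rewrite /RR /= addnAC leq_add2r.
Qed.

Lemma cR_sh e c r : cR (e + c) (map (sh c) r) = cR e r.
Proof.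
elim: r e => [|x r IH] e //=.
by rewrite leq_add2r addnAC IH.
Qed.

Lemma all_RR_sh x r : all (RR x) (map (sh (x.1 + x.2)) r).
Proof. by apply/allP => y /mapP [z _ ->]; rewrite /RR /= leq_addl. Qed.

Lemma memE k d r :
  (r \in E k d) = [&& size r == k, pairwise RR r & cR d r].
Proof.
elim: k d r => [|k IH] d r.
  by case: r => [|x r] //=; rewrite inE.
apply/allpairsPdep/idP.
  case=> x [r'' [Hx Hr ->]].
  move: Hx Hr; rewrite mem_Xs IH => Hx /and3P [/eqP Hs Hp Hc] /=.
  rewrite size_map Hs eqxx /= all_RR_sh pairwise_sh Hp Hx /=.
  have -> : (d + x.2 = (d - x.1) + (x.1 + x.2))%N by lia.
  by rewrite cR_sh.
case: r => [|x r'] //= /and3P [Hs /andP [Hall Hp] /andP [Hx Hc]].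
rewrite eqSS in Hs.
set c := (x.1 + x.2)%N.
have Hm : map (sh c) (map (fun y => (y.1 - c, y.2)) r') = r'.
  rewrite -map_comp -[RHS]map_id; apply/eq_in_map => y Hy /=.
  have := allP Hall y Hy; rewrite /RR /sh /= -/c => H.
  by rewrite subnK //; case: y {Hy H}.
exists x; exists (map (fun y => (y.1 - c, y.2)) r'); split.
- by rewrite mem_Xs.
- 
rewrite IH size_map Hs -(pairwise_sh c) Hm Hp /= -(cR_sh _ c) Hm.
  by rewrite /c addnA subnK.
by rewrite -/c Hm.
Qed.

Lemma E_S k d : E k.+1 d =
  [seq x :: map (sh (x.1 + x.2)) r | x : nat * bool <- Xs d, r <- E k (d - x.1)].
Proof. by []. Qed.

Lemma uniqE k d : uniq (E k d).
Proof.
elim: k d => [|k IH] d; first by [].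
rewrite E_S.
apply: allpairs_uniq_dep; first exact: uniq_Xs.
  by move=> x _; apply: IH.
move=> [x r] [x' r'] _ _ /= [-> /(inj_map _)].
move=> H; congr Tagged; apply: H.
by move=> [a b] [a' b'] /= [/addIn -> ->].
Qed.

Lemma memE_size k d r : r \in E k d -> size r = k.
Proof. by rewrite memE => /and3P [/eqP]. Qed.

Lemma memE_intro k d r : size r = k -> pairwise RR r -> cR d r -> r \in E k d.
Proof. by move=> Hs Hp Hc; rewrite memE Hs eqxx Hp Hc. Qed.

Lemma memE_elim k d r : r \in E k d -> [/\ size r = k, pairwise RR r & cR d r].
Proof. by rewrite memE => /and3P [/eqP]. Qed.

Section SC.
Local Open Scope ring_scope.

Definition W (a : nat) (s : seq (nat * bool)) : {poly rat} :=
  (-1) ^+ ol s * 'X^(opsize s + ol s * a).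

Lemma ol_sh c r : ol (map (sh c) r) = ol r.
Proof. by rewrite /ol count_map. Qed.

Lemma opsize_sh c r : opsize (map (sh c) r) = (opsize r + size r * c)%N.
Proof.
elim: r => [|y r IH] //=. rewrite /opsize /= in IH *. rewrite IH /opval /=. lia.
Qed.

Lemma W_cons a x c r :
  W a (x :: map (sh c) r) = (-1) ^+ x.2 * 'X^(x.1 + x.2 * a + size r * c) * W a r.
Proof.
rewrite /W.
have -> : ol (x :: map (sh c) r) = (x.2 + ol r)%N by rewrite /= ol_sh.
have -> : opsize (x :: map (sh c) r) = (x.1 + (opsize r + size r * c))%N.
  by rewrite -opsize_sh.
have -> : (x.1 + (opsize r + size r * c) + (x.2 + ol r) * a
   = (x.1 + x.2 * a + size r * c) + (opsize r + ol r * a))%N by lia.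
rewrite exprD exprD; ring.
Qed.

Lemma sumE a k d : \sum_(r <- E k d) W a r = qpoch ('X^a) k * G k d.
Proof.
elim: k d => [|k IH] d.
  by rewrite /= big_seq1 /W /= qpoch0 /opsize /= ?mul0n ?addn0 !expr0 !mul1r.
rewrite E_S big_allpairs_dep /=.
transitivity (\sum_(x <- Xs d) (-1) ^+ x.2 * 'X^(x.1 + x.2 * a + k * (x.1 + x.2))
    * (qpoch ('X^a) k * G k (d - x.1))).
  apply: eq_bigr => x _; rewrite -IH mulr_sumr big_seq [RHS]big_seq.
  apply: eq_bigr => r Hr.
  by rewrite W_cons (memE_size _ _ _ Hr).
rewrite /Xs big_allpairs -[iota 0 d.+1]/(index_iota 0 d.+1) big_mkord qpochS mulr_sumr.
apply: eq_bigr => v _; rewrite !big_cons big_nil /=.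
have -> : (v + 0 * a + k * (v + 0) = k.+1 * v)%N by lia.
have -> : (v + 1 * a + k * (v + 1) = k.+1 * v + (a + k))%N by lia.
rewrite !exprD expr0 expr1; ring.
Qed.

End SC.

Lemma pairwise_rev T (r : rel T) s :
  pairwise r (rev s) = pairwise (fun x y => r y x) s.
Proof.
elim: s => [|x s IH] //=.
rewrite rev_cons -cats1 pairwise_cat IH /= andbT; congr (_ && _).
by rewrite allrel1r all_rev.
Qed.

Lemma iotaS0 n : iota 0 n.+1 = 0%N :: map succn (iota 0 n).
Proof. by rewrite /= -[1%N]/(1 + 0)%N iotaDl. Qed.

Lemma all_iota_nth T (x0 : T) (p : pred T) s :
  all p s = all (fun r => p (nth x0 s r)) (iota 0 (size s)).
Proof. by rewrite -{1}(mkseq_nth x0 s) /mkseq all_map. Qed.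

Lemma op_first_cons y s :
  op_first (y :: s) = all (fun z => z.2 ==> (y.1 != z.1)) s && op_first s.
Proof.
rewrite /op_first [size _]/= iotaS0 /= implybT /= all_map.
rewrite (@all_iota_nth _ (0%N, false)) -all_predI; apply: eq_all => r /=.
rewrite -[1%N]/(1 + 0)%N iotaDl all_map /opover /opval.
by case: (nth _ s r).2.
Qed.

Lemma op_first_pw s :
  op_first s = pairwise (fun a b => b.2 ==> (a.1 != b.1)) s.
Proof.
elim: s => [|y s IH] //.
by rewrite op_first_cons IH.
Qed.

Lemma isop_rev s : is_overpartition s = pairwise RR (rev s).
Proof.
rewrite /is_overpartition /op_nonincr op_first_pw pairwise_rev.
rewrite sorted_pairwise; last by move=> a b c /= H1 H2; apply: leq_trans H2 H1.
elim: s => [|y s IH] //=.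
rewrite -IH.
have -> : all (fun x => RR x y) s =
   all (fun y0 => opval y0 <= opval y)%N s && all (fun b => b.2 ==> (y.1 != b.1)) s.
  rewrite -all_predI; apply: eq_all => z /=.
  rewrite /RR /opval; case: z.2 => /=.
    by rewrite addn1 ltn_neqAle andbC eq_sym.
  by rewrite addn0 andbT.
rewrite !andbA; congr (_ && _).
by rewrite -!andbA (andbC (pairwise _ s)).
Qed.

Lemma cond_all j s : (size s <= j)%N -> all (fun x => x.1 < j)%N s ->
  op_cond2 j s =
  all (fun r => (opval (nth (0%N, false) s r) <= (j - size s) + ol (drop r.+1 s))%N)
      (iota 0 (size s)).
Proof.
move=> Hsj /allP Hb.
rewrite /op_cond2; apply/idP/idP.
  move=> /allP H; apply/allP => r Hr.
  have Hr' : (r < size s)%N by move: Hr; rewrite mem_iota.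
  have Hv : (opval (nth (0%N, false) s r) < j)%N by apply: Hb; apply: mem_nth.
  set v := opval (nth (0%N, false) s r) in Hv *.
  case: (leqP v (j - size s)) => Hvs; first by apply: leq_trans Hvs (leq_addr _ _).
  have Hsp : (j - v \in iota 1 (size s).-1) by rewrite mem_iota -subn1; lia.
  have := allP (H _ Hsp) r Hr.
  have -> : (v + (j - v) == j) by apply/eqP; lia.
  by rewrite /= -/v; lia.
move=> /allP H; apply/allP => sp Hsp; apply/allP => r Hr; apply/implyP => /eqP Hv.
have := H r Hr. move: Hsp; rewrite mem_iota -subn1; lia.
Qed.

Fixpoint c2 (e : nat) (s : seq (nat * bool)) : bool :=
  if s is y :: s' then (y.1 <= e + ol s')%N && c2 e s' else true.

Lemma all_c2 e s :
  all (fun r => (opval (nth (0%N, false) s r) <= e + ol (drop r.+1 s))%N)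
      (iota 0 (size s)) = c2 e s.
Proof.
elim: s => [|y s IH] //.
by rewrite [size _]/= iotaS0 /= all_map drop0 -IH.
Qed.

Lemma cR_rcons e r y : cR e (rcons r y) = cR e r && (y.1 <= e + ol r)%N.
Proof.
elim: r e => [|x r IH] e /=; first by rewrite /ol /= addn0 andbT.
rewrite IH /ol /= addnA andbA //.
Qed.

Lemma c2_rev e s : c2 e s = cR e (rev s).
Proof.
elim: s => [|y s IH] //=.
by rewrite rev_cons cR_rcons -IH /ol count_rev andbC.
Qed.

Lemma cond_rev j s : (size s <= j)%N -> all (fun x => x.1 < j)%N s ->
  op_cond2 j s = cR (j - size s) (rev s).
Proof. by move=> H1 H; rewrite cond_all // all_c2 c2_rev. Qed.

Lemma cR_bound e r : cR e r -> all (fun x => x.1 < e + size r)%N r.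
Proof.
elim: r e => [|x r IH] e //= /andP [Hx Hc].
apply/andP; split; first by lia.
apply/allP => y Hy; have := allP (IH _ Hc) y Hy.
move=> H; apply: (leq_trans H); case: x.2 {Hx Hc} => /=; lia.
Qed.

Lemma tuple_ex j s n : size s = n -> all (fun x => x.1 < j)%N s ->
  exists t : n.-tuple ('I_j * bool), op_of_tuple t = s.
Proof.
elim: s n => [|x s IH] n.
  by move=> <- _; exists [tuple].
case: n => [|n] //= [Hs] /andP [Hx Ha].
have [t Ht] := IH n Hs Ha.
exists [tuple of (Ordinal Hx, x.2) :: t].
by rewrite /op_of_tuple /= -Ht; case: x {Hx}.
Qed.

Lemma op_inj j k : injective (@op_of_tuple j k).
Proof.
move=> t1 t2 /inj_map H; apply: val_inj; apply: H.
by move=> [a b] [c d] /= [/val_inj -> ->].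
Qed.

Section SD.
Local Open Scope ring_scope.

Lemma W_rev a s : W a (rev s) = W a s.
Proof. by rewrite /W /ol count_rev /opsize map_rev sumn_rev. Qed.

Lemma key j k a : (k <= j)%N ->
  \sum_(t : k.-tuple ('I_j * bool) | inO t) W a (op_of_tuple t)
  = \sum_(r <- E k (j - k)) W a r.
Proof.
move=> hkj.
rewrite -big_filter.
transitivity (\sum_(t <- [seq t <- index_enum (k.-tuple ('I_j * bool)) | inO t])
     W a (rev (op_of_tuple t))).
  by apply: eq_bigr => t _; rewrite W_rev.
rewrite -(big_map (fun t => rev (op_of_tuple t)) xpredT (W a)).
apply: perm_big; apply: uniq_perm.
- rewrite map_inj_uniq ?filter_uniq ?index_enum_uniq //.
  by move=> t1 t2 /(can_inj revK) /op_inj.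
- exact: uniqE.
move=> r; apply/mapP/idP.
  case=> t; rewrite mem_filter => /andP [Ht _] ->.
  have Hb : all (fun x => x.1 < j)%N (op_of_tuple t).
    by rewrite /op_of_tuple all_map; apply/allP => x _ /=.
  have Hsz : size (op_of_tuple t) = k by rewrite size_map size_tuple.
  move: Ht; rewrite /inO isop_rev cond_rev ?Hsz // => /andP [H1 H2].
  by apply: memE_intro; rewrite ?size_rev.
move=> /memE_elim [Hs Hp Hc].
have Hb : all (fun x => x.1 < j)%N (rev r).
  rewrite all_rev; have := cR_bound _ _ Hc; rewrite Hs subnK //.
have [t Ht] := tuple_ex _ _ _ (size_rev r) Hb.
rewrite Hs in t Ht *.
exists t; last by rewrite Ht revK.
rewrite mem_filter mem_index_enum andbT /inO Ht isop_rev revK Hp /=.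
by rewrite cond_rev ?size_rev ?Hs // revK.
Qed.

End SD.
Local Open Scope ring_scope.

Theorem theorem2p2 (i j : nat) (hji : (j <= i)%N) :
  \sum_(k < j.+1)
     qpoch ('X^(i - k + 1)) k * gauss j k * 'X^((i - k) * (j - k))
  =
  \sum_(k < j.+1) \sum_(t : k.-tuple ('I_j * bool) | inO t)
     (-1) ^+ ol (op_of_tuple t)
       * 'X^(opsize (op_of_tuple t) + ol (op_of_tuple t) * (i - k + 1))
       * 'X^((i - k) * (j - k)) :> {poly rat}.
Proof.
apply: eq_bigr => k _.
have hk : (k <= j)%N by rewrite -ltnS ltn_ord.
rewrite -mulr_suml.
have -> : gauss j k = G k (j - k) by rewrite -gaussG subnK.
congr (_ * _).
rewrite -sumE -(key _ _ _ hk).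
by apply: eq_bigr.
Qed.
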